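(* Let $G$ be a finite graph and let $(\mathcal{P}_1,R_1),\dots,(\mathcal{P}_m,R_m)$ be a minimal merge sequence for $G$. Let $i\in\{1,\dots,m\}$, let $X,Y\in\mathcal{P}_i$ (possibly $X=Y$), and let $x_1,x_2\in X$ and $y_1,y_2\in Y$ be such that $\{x_1,y_1\}$ and $\{x_2,y_2\}$ are pairs of distinct vertices which are both not in $R_i$. Then for every $j\in\{1,\dots,m\}$, the pairs $\{x_1,y_1\}$ and $\{x_2,y_2\}$ are either both in $R_j$ or both not in $R_j$.
   Context: A merge sequence for a graph $G=(V,E)$ is a sequence $(\mathcal{P}_1,R_1),\dots,(\mathcal{P}_m,R_m)$ where: (1) each $\mathcal{P}_i$ is a partition of $V$, $\mathcal{P}_1$ is the partition into singletons, $\mathcal{P}_m=\{V\}$, and each part of $\mathcal{P}_i$ is a union of parts of $\mathcal{P}_{i-1}$; (2) $R_1\subseteq\dots\subseteq R_m\subseteq\binom{V}{2}$ are sets of unordered pairs of distinct vertices (resolved pairs); (3) for any two (possibly equal) parts $A,B\in\mathcal{P}_i$, the pairs $\{a,b\}$ with $a\in A$, $b\in B$, $a\neq b$, not in $R_i$ are either all edges or all non-edges of $G$. A merge sequence is minimal for $G$ if there is no different sequence $R'_1,\dots,R'_m$ such that $(\mathcal{P}_1,R'_1),\dots,(\mathcal{P}_m,R'_m)$ is a merge sequence for $G$ and $R'_i\subseteq R_i$ for all $i$. *)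

(* Defs.v *)
From mathcomp Require Import all_boot.
Set Implicit Arguments. Unset Strict Implicit. Unset Printing Implicit Defensive.

(* A finite simple graph: vertex set a finType T, adjacency e : rel T
   (assumed symmetric and irreflexive in the theorem).
   An unordered pair {a,b} of distinct vertices is the 2-element set [set a; b].
   A merge sequence (P_1,R_1),...,(P_m,R_m) is encoded 0-based:
   P i, R i for i = 0, ..., m-1. *)

Definition is_pair (T : finType) (p : {set T}) : bool := #|p| == 2.

Definition merge_seq (T : finType) (e : rel T)
    (P R : nat -> {set {set T}}) (m : nat) : Prop :=
  0 < m /\
      (forall i, i < m -> partition (P i) [set: T]) /\
      (P 0 = [set [set x] | x : T]) /\
      (P m.-1 = [set [set: T]]) /\
      (forall i, 0 < i < m -> forall A, A \in P i ->
          exists S : {set {set T}}, S \subset P i.-1 /\ A = cover S) /\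
      (forall i, i < m -> forall p, p \in R i -> is_pair p) /\
      (forall i j, i <= j -> j < m -> R i \subset R j) /\
      (forall i, i < m -> forall A B, A \in P i -> B \in P i ->
        forall a1 b1 a2 b2, a1 \in A -> b1 \in B -> a2 \in A -> b2 \in B ->
          a1 != b1 -> a2 != b2 ->
          [set a1; b1] \notin R i -> [set a2; b2] \notin R i ->
          e a1 b1 = e a2 b2).

Definition minimal_merge_seq (T : finType) (e : rel T)
    (P R : nat -> {set {set T}}) (m : nat) : Prop :=
  merge_seq e P R m /\
  forall R' : nat -> {set {set T}},
    merge_seq e P R' m ->
    (forall i, i < m -> R' i \subset R i) ->
    forall i, i < m -> R' i = R i.

(* Main.v *)
Require Import Defs.
From mathcomp Require Import all_boot.
Set Implicit Arguments. Unset Strict Implicit. Unset Printing Implicit Defensive.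

Lemma same_block (T : finType) (P : nat -> {set {set T}}) (m i : nat)
  (X : {set T}) (u v : T) :
  (forall i, i < m -> partition (P i) [set: T]) ->
  (forall i, 0 < i < m -> forall A, A \in P i ->
          exists S : {set {set T}}, S \subset P i.-1 /\ A = cover S) ->
  X \in P i -> u \in X -> v \in X ->
  forall k A, i <= k -> k < m -> A \in P k -> u \in A -> v \in A.
Proof.
move=> Hpart Href HX uX vX.
have eqblk : forall k, k < m -> forall A B, A \in P k -> B \in P k ->
    u \in A -> u \in B -> A = B.
  move=> k km A B HA HB uA uB.
  have /and3P[_ triv _] := Hpart k km.
  by rewrite -(def_pblock triv HA uA) -(def_pblock triv HB uB).
elim=> [|k IH] A ik km HA uA.
  move: ik; rewrite leqn0 => /eqP i0; subst i.
  by rewrite (eqblk 0 km A X HA HX uA uX).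
move: ik; rewrite leq_eqVlt => /orP[/eqP ik | ik].
  subst i. by rewrite (eqblk _ km A X HA HX uA uX).
have [S [SP AS]] := Href k.+1 km A HA.
move: uA; rewrite AS => /bigcupP[B BS uB].
have HB : B \in P k by exact: (subsetP SP).
apply/bigcupP; exists B => //.
exact: IH B ik (ltnW km) HB uB.
Qed.

Lemma one_dir (T : finType) (e : rel T)
    (e_sym : symmetric e)
    (P R : nat -> {set {set T}}) (m : nat) :
  minimal_merge_seq e P R m ->
  forall i, i < m ->
  forall X Y, X \in P i -> Y \in P i ->
  forall x1 x2 y1 y2, x1 \in X -> x2 \in X -> y1 \in Y -> y2 \in Y ->
  x1 != y1 -> x2 != y2 ->
  [set x1; y1] \notin R i -> [set x2; y2] \notin R i ->
  forall j, j < m -> [set x1; y1] \in R j -> [set x2; y2] \in R j.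
Proof.
move=> [Hms Hmin] i im X Y HX HY x1 x2 y1 y2 x1X x2X y1Y y2Y n1 n2 p1i p2i
  j jm p1j.
apply/negPn/negP => p2j.
have Hms0 := Hms.
move: Hms => [Hm [Hpart [HP0 [HPm [Href [Hpair [Hnest Hhom]]]]]]].
have HeI : e x1 y1 = e x2 y2 :=
  Hhom i im X Y HX HY x1 y1 x2 y2 x1X y1Y x2X y2Y n1 n2 p1i p2i.
set p1 := [set x1; y1] in p1i p1j *.
set p2 := [set x2; y2] in p2i p2j *.
pose R' k := if p2 \in R k then R k else R k :\ p1.
have sub : forall k, R' k \subset R k.
  by move=> k; rewrite /R'; case: ifP => _; [exact: subxx | exact: subsetDl].
have memR' : forall k q, q \in R' k -> q \in R k.
  by move=> k q; apply/subsetP.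
have Hms' : merge_seq e P R' m.
  do 5 (split; first by []); split.
  - move=> k km q /memR'; exact: Hpair k km q.
  split.
  - move=> k l kl lm. rewrite /R'. case: ifP => p2k.
      have p2l : p2 \in R l := subsetP (Hnest k l kl lm) _ p2k.
      by rewrite p2l; exact: Hnest.
    case: ifP => _.
      exact: subset_trans (subsetDl _ _) (Hnest k l kl lm).
    by rewrite setSD // Hnest.
  move=> k km A B HA HB a1 b1 a2 b2 a1A b1B a2A b2B na1 na2 q1 q2.
  have rep : forall a b, a \in A -> b \in B -> a != b -> [set a; b] \notin R' k ->
      exists c d, [/\ c \in A, d \in B, c != d, [set c; d] \notin R k
                   & e a b = e c d].
    move=> a b aA bB nab qn.
    case qk: ([set a; b] \in R k); last by exists a, b; split => //; rewrite qk.
    move: qn; rewrite /R'. case p2k: (p2 \in R k); first by rewrite qk.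
    rewrite in_setD1 qk andbT negbK => /eqP qp1.
    have ik : i <= k.
      rewrite leqNgt; apply/negP => ki.
      have := subsetP (Hnest k i (ltnW ki) im) _ qk.
      by rewrite qp1 (negbTE p1i).
    have : a \in p1 by rewrite -qp1 set21.
    rewrite !inE => /orP[/eqP ax | /eqP ay].
      have by1 : b = y1.
        have : b \in p1 by rewrite -qp1 set22.
        rewrite !inE => /orP[/eqP bx|/eqP //].
        by move: nab; rewrite ax bx eqxx.
      move: aA bB; rewrite ax by1 => aA bB.
      exists x2, y2; split => //.
      - exact: (same_block Hpart Href HX x1X x2X ik km HA aA).
      - exact: (same_block Hpart Href HY y1Y y2Y ik km HB bB).
      - by rewrite p2k.
    have bx1 : b = x1.
      have : b \in p1 by rewrite -qp1 set22.
      rewrite !inE => /orP[/eqP //|/eqP bx].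
      by move: nab; rewrite ay bx eqxx.
    move: aA bB; rewrite ay bx1 => aA bB.
    exists y2, x2; split => //.
    - exact: (same_block Hpart Href HY y1Y y2Y ik km HA aA).
    - exact: (same_block Hpart Href HX x1X x2X ik km HB bB).
    - by rewrite eq_sym.
    - have -> : [set y2; x2] = p2 by rewrite /p2 setUC.
      by rewrite p2k.
    - by rewrite [e y1 x1]e_sym HeI e_sym.
  have [c1 [d1 [c1A d1B nc1 r1 E1]]] := rep a1 b1 a1A b1B na1 q1.
  have [c2 [d2 [c2A d2B nc2 r2 E2]]] := rep a2 b2 a2A b2B na2 q2.
  rewrite E1 E2; exact: Hhom k km A B HA HB c1 d1 c2 d2 c1A d1B c2A d2B nc1 nc2 r1 r2.
have := Hmin R' Hms' (fun k _ => sub k) j jm.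
rewrite /R' /= (negbTE p2j) => /setP/(_ p1).
by rewrite in_setD1 eqxx p1j.
Qed.

Theorem lemma2p1 (T : finType) (e : rel T)
    (e_sym : symmetric e) (e_irr : irreflexive e)
    (P R : nat -> {set {set T}}) (m : nat) :
  minimal_merge_seq e P R m ->
  forall i, i < m ->
  forall X Y, X \in P i -> Y \in P i ->
  forall x1 x2 y1 y2, x1 \in X -> x2 \in X -> y1 \in Y -> y2 \in Y ->
  x1 != y1 -> x2 != y2 ->
  [set x1; y1] \notin R i -> [set x2; y2] \notin R i ->
  forall j, j < m -> ([set x1; y1] \in R j) = ([set x2; y2] \in R j).
Proof.
move=> H i im X Y HX HY x1 x2 y1 y2 x1X x2X y1Y y2Y n1 n2 p1i p2i j jm.
apply/idP/idP.
- exact: (one_dir e_sym H im HX HY x1X x2X y1Y y2Y n1 n2 p1i p2i jm).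
- exact: (one_dir e_sym H im HX HY x2X x1X y2Y y1Y n2 n1 p2i p1i jm).
Qed.
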